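(* For complex parameters $\nu,\mu$ such that all terms are defined, and complex $x$, $$e^{-x}\sum_{n\ge0}\frac{(-x)^n}{(\mu)_n}\left\{L_n^{(\nu)}(x)-\frac{x}{\nu+2}L_n^{(\nu+1)}(x)\right\}={}_3F_3\!\left[\begin{matrix}\nu+3,\ \frac{\mu}{2}+\frac{\nu}{2}+1,\ \frac{\mu}{2}+\frac{\nu}{2}+\frac12\\ \nu+2,\ \mu,\ \mu+\nu+1\end{matrix};-4x\right]+\frac{2x}{\mu}\,{}_3F_3\!\left[\begin{matrix}\nu+3,\ \frac{\mu}{2}+\frac{\nu}{2}+1,\ \frac{\mu}{2}+\frac{\nu}{2}+\frac32\\ \nu+2,\ \mu+1,\ \mu+\nu+2\end{matrix};-4x\right]$$ $$+\frac{x^2}{\mu(\mu+1)}\,{}_3F_3\!\left[\begin{matrix}\nu+3,\ \frac{\mu}{2}+\frac{\nu}{2}+2,\ \frac{\mu}{2}+\frac{\nu}{2}+\frac32\\ \nu+2,\ \mu+2,\ \mu+\nu+3\end{matrix};-4x\right].$$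
   Context: $(a)_k=a(a+1)\cdots(a+k-1)$ is the Pochhammer symbol; ${}_3F_3\!\left[\begin{matrix}a_1,a_2,a_3\\ b_1,b_2,b_3\end{matrix};z\right]=\sum_{k\ge0}\frac{(a_1)_k(a_2)_k(a_3)_k}{(b_1)_k(b_2)_k(b_3)_k}\frac{z^k}{k!}$. $L_n^{(\alpha)}(x)=\frac{(\alpha+1)_n}{n!}\sum_{k=0}^n\frac{(-n)_k}{(\alpha+1)_k}\frac{x^k}{k!}$ is the generalized Laguerre polynomial. *)

(* Defs.v *)
From Stdlib Require Import Reals Factorial.
From Coquelicot Require Export Coquelicot.
Open Scope C_scope.

Fixpoint cpow (z : C) (n : nat) : C :=
  match n with O => 1 | S n => cpow z n * z end.

Fixpoint poch (a : C) (k : nat) : C :=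
  match k with O => 1 | S k => poch a k * (a + RtoC (INR k)) end.

Definition cfact (k : nat) : C := RtoC (INR (fact k)).

Fixpoint csum (f : nat -> C) (n : nat) : C :=
  match n with O => f O | S n => csum f n + f (S n) end.

Definition laguerre (n : nat) (alpha x : C) : C :=
  poch (alpha + 1) n / cfact n *
  csum (fun k => poch (- RtoC (INR n)) k / poch (alpha + 1) k
                 * cpow x k / cfact k) n.

Definition cexp (z : C) : C :=
  (exp (Re z) * cos (Im z), exp (Re z) * sin (Im z))%R.

(* k-th term of the 3F3 series; the value of 3F3 is the sum of these terms *)
Definition F33_term (a1 a2 a3 b1 b2 b3 z : C) (k : nat) : C :=
  poch a1 k * poch a2 k * poch a3 k / (poch b1 k * poch b2 k * poch b3 k)
  * cpow z k / cfact k.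

(* Main.v *)
Require Import Defs.
From Stdlib Require Import Reals Lra Lia Factorial.
From Coquelicot Require Import Coquelicot.
Open Scope C_scope.

Lemma sum_n_csum (a : nat -> C) n : sum_n a n = csum a n.
Proof.
  induction n; simpl. now rewrite sum_O.
  rewrite sum_Sn, IHn. reflexivity.
Qed.

Lemma cpow_Cpow z n : cpow z n = Cpow z n.
Proof. induction n; simpl; auto. rewrite IHn; ring. Qed.

Lemma INR_S_C k : RtoC (INR (S k)) = RtoC (INR k) + 1.
Proof. rewrite S_INR, RtoC_plus. reflexivity. Qed.

Lemma poch_front a k : poch a (S k) = a * poch (a + 1) k.
Proof.
  induction k. simpl. ring.
  change (poch a (S (S k))) with (poch a (S k) * (a + RtoC (INR (S k)))).
  rewrite IHk, INR_S_C. cbn [poch]. ring.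
Qed.

Lemma poch_add a k r : poch a (k + r) = poch a k * poch (a + RtoC (INR k)) r.
Proof.
  induction r. rewrite Nat.add_0_r. simpl. ring.
  rewrite Nat.add_succ_r. cbn [poch]. rewrite IHr, plus_INR, RtoC_plus. ring.
Qed.

Lemma poch_neg_zero n k : (n < k)%nat -> poch (- RtoC (INR n)) k = 0.
Proof.
  intros H. replace k with (S n + (k - S n))%nat by lia.
  rewrite poch_add. simpl. ring.
Qed.

Lemma poch_nz a n : (forall i : nat, a + RtoC (INR i) <> 0) -> poch a n <> 0.
Proof.
  intros H. induction n; simpl. intro E. injection E; lra.
  apply Cmult_neq_0; auto.
Qed.

Lemma cfact_S k : cfact (S k) = cfact k * (RtoC (INR k) + 1).
Proof. unfold cfact. rewrite fact_simpl, mult_INR, <- INR_S_C, RtoC_mult. ring. Qed.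

Lemma cfact_nz k : cfact k <> 0.
Proof. unfold cfact. intro E. injection E. intro. pose proof (INR_fact_neq_0 k). lra. Qed.

Lemma RtoC_nz (r : R) : r <> 0%R -> RtoC r <> 0.
Proof. intros H E. apply H. apply (f_equal fst) in E. simpl in E. exact E. Qed.

Lemma INR_S_nz k : RtoC (INR k) + 1 <> 0.
Proof. rewrite <- INR_S_C. apply RtoC_nz. apply not_0_INR. lia. Qed.
Lemma csum_ext_loc (f g : nat -> C) n : (forall k, (k <= n)%nat -> f k = g k) -> csum f n = csum g n.
Proof.
  induction n; intros H; simpl. apply H; lia.
  rewrite IHn by (intros; apply H; lia). rewrite H by lia. reflexivity.
Qed.

Lemma csum_ext (f g : nat -> C) n : (forall k, f k = g k) -> csum f n = csum g n.
Proof. intros; apply csum_ext_loc; auto. Qed.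

Lemma csum_plus (f g : nat -> C) n : csum (fun k => f k + g k) n = csum f n + csum g n.
Proof. induction n; simpl; auto. rewrite IHn. ring. Qed.

Lemma csum_scal (c : C) (f : nat -> C) n : csum (fun k => c * f k) n = c * csum f n.
Proof. induction n; simpl; auto. rewrite IHn. ring. Qed.

Lemma csum_shift (f : nat -> C) n : csum f (S n) = f O + csum (fun k => f (S k)) n.
Proof. induction n. simpl. ring. change (csum f (S (S n))) with (csum f (S n) + f (S (S n))).
  rewrite IHn. simpl. ring. Qed.

Lemma csum_zero_tail (f : nat -> C) n p : (n <= p)%nat -> (forall k, (n < k)%nat -> (k <= p)%nat -> f k = 0) ->
  csum f p = csum f n.
Proof.
  induction p; intros Hnp H. replace n with O by lia. reflexivity.
  destruct (Nat.eq_dec n (S p)). subst; reflexivity.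
  simpl. rewrite IHp by (try lia; intros; apply H; lia). rewrite (H (S p)) by lia. ring.
Qed.

Lemma csum_diag (g : nat -> nat -> C) M :
  csum (fun m => csum (fun n => g n (m - n)%nat) m) M =
  csum (fun n => csum (fun k => g n k) (M - n)%nat) M.
Proof.
  induction M. simpl. reflexivity.
  change (csum (fun m => csum (fun n => g n (m - n)%nat) m) (S M)) with
    (csum (fun m => csum (fun n => g n (m - n)%nat) m) M + csum (fun n => g n (S M - n)%nat) (S M)).
  rewrite IHM.
  change (csum (fun n => csum (fun k => g n k) (S M - n)%nat) (S M)) with
    (csum (fun n => csum (fun k => g n k) (S M - n)%nat) M + csum (fun k => g (S M) k) (S M - S M)%nat).
  rewrite Nat.sub_diag. 
  change (csum (fun n => g n (S M - n)%nat) (S M)) with (csum (fun n => g n (S M - n)%nat) M + g (S M) (S M - S M)%nat).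
  rewrite Nat.sub_diag.
  rewrite (csum_ext_loc (fun n => csum (fun k => g n k) (S M - n)%nat)
      (fun n => csum (fun k => g n k) (M - n)%nat + g n (S M - n)%nat)).
  rewrite csum_plus. simpl. ring.
  intros k Hk. replace (S M - k)%nat with (S (M - k)) by lia. simpl. replace (M - k)%nat with (M - k)%nat by lia. reflexivity.
Qed.

Lemma Cmod_csum (f : nat -> C) n : Cmod (csum f n) <= sum_f_R0 (fun k => Cmod (f k)) n.
Proof.
  induction n; simpl. lra.
  eapply Rle_trans. apply Cmod_triangle. lra.
Qed.

Lemma csum_RtoC (f : nat -> R) n : csum (fun k => RtoC (f k)) n = RtoC (sum_f_R0 f n).
Proof. induction n; simpl; auto. rewrite IHn, RtoC_plus. reflexivity. Qed.
Lemma nz_shift (c : C) : (forall i : nat, c + RtoC (INR i) <> 0) -> (forall i : nat, c + 1 + RtoC (INR i) <> 0).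
Proof. intros H i. replace (c + 1 + RtoC (INR i)) with (c + RtoC (INR (S i))) by (rewrite INR_S_C; ring). apply H. Qed.

Lemma vdm_step t k b c : (forall i : nat, c + RtoC (INR i) <> 0) ->
  poch (- RtoC (INR (S t))) (S k) * poch b (S k) / (poch c (S k) * cfact (S k)) =
  poch (- RtoC (INR t)) (S k) * poch b (S k) / (poch c (S k) * cfact (S k))
  - b / c * (poch (- RtoC (INR t)) k * poch (b + 1) k / (poch (c + 1) k * cfact k)).
Proof.
  intros Hc.
  assert (Hc1 := nz_shift c Hc).
  assert (H0 : c <> 0) by (replace c with (c + RtoC (INR 0)) by (simpl; ring); apply Hc).
  assert (P1 := poch_nz _ k Hc1). assert (F := cfact_nz k).
  assert (Hk := INR_S_nz k).
  replace (poch (- RtoC (INR t)) (S k)) with (poch (- RtoC (INR t)) k * (- RtoC (INR t) + RtoC (INR k))) by reflexivity.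
  rewrite !poch_front, cfact_S.
  replace (- RtoC (INR (S t)) + 1) with (- RtoC (INR t)) by (rewrite INR_S_C; ring).
  rewrite INR_S_C. field. repeat split; auto.
Qed.

Lemma vandermonde t : forall b c, (forall i : nat, c + RtoC (INR i) <> 0) ->
  csum (fun k => poch (- RtoC (INR t)) k * poch b k / (poch c k * cfact k)) t = poch (c - b) t / poch c t.
Proof.
  induction t; intros b c Hc.
  - simpl. unfold cfact. simpl. field. 
  - assert (Hc1 := nz_shift c Hc).
    assert (H0 : c <> 0) by (replace c with (c + RtoC (INR 0)) by (simpl; ring); apply Hc).
    rewrite csum_shift.
    rewrite (csum_ext _ (fun k => poch (- RtoC (INR t)) (S k) * poch b (S k) / (poch c (S k) * cfact (S k))
      - b / c * (poch (- RtoC (INR t)) k * poch (b + 1) k / (poch (c + 1) k * cfact k)))) by (intros; apply vdm_step; auto).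
    assert (E1 : csum (fun k => poch (- RtoC (INR t)) k * poch b k / (poch c k * cfact k)) (S t) =
                 csum (fun k => poch (- RtoC (INR t)) k * poch b k / (poch c k * cfact k)) t).
    { apply csum_zero_tail. lia. intros k H1 H2. rewrite poch_neg_zero by lia. unfold Cdiv. ring. }
    rewrite csum_shift in E1.
    assert (E2 := IHt (b + 1) (c + 1) Hc1).
    unfold Cminus at 1.
    rewrite csum_plus.
    rewrite (csum_ext (fun k => - (b / c * _)) (fun k => (- (b / c)) * (poch (- RtoC (INR t)) k * poch (b + 1) k / (poch (c + 1) k * cfact k)))) by (intros; ring).
    rewrite csum_scal, E2.
    replace (poch (- RtoC (INR (S t))) 0 * poch b 0 / (poch c 0 * cfact 0)) with (poch (- RtoC (INR t)) 0 * poch b 0 / (poch c 0 * cfact 0)) by (unfold cfact; simpl; reflexivity).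
    replace (poch (- RtoC (INR t)) 0 * poch b 0 / (poch c 0 * cfact 0) +
  (csum (fun k => poch (- RtoC (INR t)) (S k) * poch b (S k) / (poch c (S k) * cfact (S k))) t +
   - (b / c) * (poch (c + 1 - (b + 1)) t / poch (c + 1) t))) with
     ((poch (- RtoC (INR t)) 0 * poch b 0 / (poch c 0 * cfact 0) +
  csum (fun k => poch (- RtoC (INR t)) (S k) * poch b (S k) / (poch c (S k) * cfact (S k))) t) +
   - (b / c) * (poch (c + 1 - (b + 1)) t / poch (c + 1) t)) by ring.
    rewrite E1, IHt by auto.
    replace (c + 1 - (b + 1)) with (c - b) by ring.
    assert (Ht : poch c (S t) = poch c t * (c + RtoC (INR t))) by reflexivity.
    assert (Ht' := poch_front c t).
    assert (P0 := poch_nz c t Hc). assert (P1 := poch_nz (c+1) t Hc1).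
    assert (P2 := poch_nz c (S t) Hc).
    assert (Hct : c + RtoC (INR t) <> 0) by apply Hc.
    replace (poch (c - b) (S t)) with (poch (c - b) t * (c - b + RtoC (INR t))) by reflexivity.
    rewrite Ht.
    assert (poch (c+1) t = poch c t * (c + RtoC (INR t)) / c) as ->.
    { rewrite <- Ht, Ht'. field. auto. }
    field. repeat split; auto.
Qed.
Lemma cpow_add z a b : cpow z (a + b) = cpow z a * cpow z b.
Proof. induction b. rewrite Nat.add_0_r. simpl. ring. rewrite Nat.add_succ_r. simpl. rewrite IHb. ring. Qed.

Lemma cpow_mult a b n : cpow (a * b) n = cpow a n * cpow b n.
Proof. induction n; simpl. ring. rewrite IHn. ring. Qed.

Lemma cpow_m1_sq n : cpow (-1) n * cpow (-1) n = 1.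
Proof. induction n; simpl. ring. replace (cpow (-1) n * -1 * (cpow (-1) n * -1)) with (cpow (-1) n * cpow (-1) n) by ring. auto. Qed.

Lemma cpow_m1_nz n : cpow (-1) n <> 0.
Proof. intro E. assert (H := cpow_m1_sq n). rewrite E in H. apply RtoC_nz with 1%R. lra. rewrite <- H. ring. Qed.

Lemma poch_refl a n : poch (- a - RtoC (INR n) + 1) n = cpow (-1) n * poch a n.
Proof.
  revert a. induction n; intros a. simpl. ring.
  rewrite poch_front. replace (- a - RtoC (INR (S n)) + 1 + 1) with (- a - RtoC (INR n) + 1) by (rewrite INR_S_C; ring).
  rewrite IHn. cbn [cpow poch]. rewrite INR_S_C. ring.
Qed.

Lemma poch_one n : poch 1 n = cfact n.
Proof. induction n. reflexivity. cbn [poch]. rewrite IHn, cfact_S. ring. Qed.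

Lemma minus_INR_C m n : (n <= m)%nat -> RtoC (INR (m - n)) = RtoC (INR m) - RtoC (INR n).
Proof. intros H. rewrite minus_INR by auto. unfold Rminus. rewrite RtoC_plus, RtoC_opp. reflexivity. Qed.

Lemma negpoch t k : (k <= t)%nat -> poch (- RtoC (INR t)) k * cfact (t - k) = cpow (-1) k * cfact t.
Proof.
  intros H.
  assert (E : - RtoC (INR t) = - (RtoC (INR (t - k)) + 1) - RtoC (INR k) + 1) by (rewrite minus_INR_C by auto; ring).
  rewrite E, poch_refl.
  rewrite <- !poch_one.
  assert (A := poch_add 1 (t - k) k). replace (t - k + k)%nat with t in A by lia.
  rewrite A. replace (1 + RtoC (INR (t - k))) with (RtoC (INR (t - k)) + 1) by ring. ring.
Qed.

Definition lcoef (nu : C) (n k : nat) : C :=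
  poch (nu + 1) n / cfact n * (poch (- RtoC (INR n)) k / poch (nu + 1) k / cfact k).

Lemma kummer_coef nu n t : (forall i : nat, nu + 1 + RtoC (INR i) <> 0) ->
  csum (fun k => cpow (-1) (t - k) / cfact (t - k) * lcoef nu n k) t =
  cpow (-1) t * poch (nu + 1) (n + t) / (poch (nu + 1) t * cfact n * cfact t).
Proof.
  intros Hnu.
  rewrite (csum_ext_loc _ (fun k => (cpow (-1) t / cfact t * (poch (nu + 1) n / cfact n)) *
     (poch (- RtoC (INR t)) k * poch (- RtoC (INR n)) k / (poch (nu + 1) k * cfact k)))).
  - rewrite csum_scal, vandermonde by auto.
    rewrite poch_add. replace (nu + 1 - - RtoC (INR n)) with (nu + 1 + RtoC (INR n)) by ring.
    assert (P := poch_nz (nu+1) t Hnu). assert (F1 := cfact_nz n). assert (F2 := cfact_nz t).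
    field. auto.
  - intros k Hk. unfold lcoef.
    assert (N := negpoch t k Hk).
    assert (P := poch_nz (nu+1) k Hnu). assert (F1 := cfact_nz n). assert (F2 := cfact_nz t).
    assert (F3 := cfact_nz k). assert (F4 := cfact_nz (t - k)).
    assert (S1 := cpow_m1_sq k). assert (M1 := cpow_m1_nz k).
    assert (T : cpow (-1) t = cpow (-1) (t - k) * cpow (-1) k) by (rewrite <- cpow_add; f_equal; lia).
    rewrite T.
    replace (poch (- RtoC (INR t)) k) with (cpow (-1) k * cfact t / cfact (t - k)) by (rewrite <- N; field; auto).
    assert (E : forall A, A = cpow (-1) k * cpow (-1) k * A) by (intros; rewrite S1; ring).
    rewrite (E (cpow (-1) (t - k) / cfact (t - k))).
    field. repeat split; auto.
Qed.

Lemma vsum mu nu m : (forall i : nat, mu + RtoC (INR i) <> 0) -> (forall i : nat, nu + 1 + RtoC (INR i) <> 0) ->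
  csum (fun n => / (poch mu n * poch (nu + 1) (m - n) * cfact n * cfact (m - n))) m =
  poch (mu + nu + RtoC (INR m)) m / (poch mu m * poch (nu + 1) m * cfact m).
Proof.
  intros Hmu Hnu.
  rewrite (csum_ext_loc _ (fun n => / (cfact m * poch (nu + 1) m) *
     (poch (- RtoC (INR m)) n * poch (- nu - RtoC (INR m)) n / (poch mu n * cfact n)))).
  - rewrite csum_scal, vandermonde by auto.
    replace (mu - (- nu - RtoC (INR m))) with (mu + nu + RtoC (INR m)) by ring.
    assert (P := poch_nz mu m Hmu). assert (P2 := poch_nz (nu+1) m Hnu). assert (F1 := cfact_nz m).
    field. auto.
  - intros n Hn.
    assert (N := negpoch m n Hn).
    assert (R := poch_refl (nu + 1 + RtoC (INR (m - n))) n).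
    replace (- (nu + 1 + RtoC (INR (m - n))) - RtoC (INR n) + 1) with (- nu - RtoC (INR m)) in R by (rewrite minus_INR_C by auto; ring).
    assert (A := poch_add (nu + 1) (m - n) n). replace (m - n + n)%nat with m in A by lia.
    rewrite R.
    replace (poch (- RtoC (INR m)) n) with (cpow (-1) n * cfact m / cfact (m - n)) by (rewrite <- N; field; apply cfact_nz).
    rewrite A.
    assert (P := poch_nz mu n Hmu). assert (P2 := poch_nz (nu+1) (m - n) Hnu).
    assert (P3 : poch (nu + 1 + RtoC (INR (m - n))) n <> 0).
    { intro E. apply (poch_nz (nu+1) m Hnu). rewrite A, E. ring. }
    assert (F1 := cfact_nz m). assert (F2 := cfact_nz n). assert (F3 := cfact_nz (m - n)).
    assert (S1 := cpow_m1_sq n).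
    assert (E : forall A, A = cpow (-1) n * cpow (-1) n * A) by (intros; rewrite S1; ring).
    rewrite (E (/ _)).
    field. repeat split; auto.
Qed.
Lemma csum_rev (f : nat -> C) m : csum f m = csum (fun j => f (m - j)%nat) m.
Proof.
  revert f. induction m; intros f. reflexivity.
  rewrite csum_shift, IHm.
  change (csum (fun j => f (S m - j)%nat) (S m)) with (csum (fun j => f (S m - j)%nat) m + f (S m - S m)%nat).
  rewrite Nat.sub_diag.
  rewrite (csum_ext_loc (fun j => f (S (m - j))) (fun j => f (S m - j)%nat)). apply Cplus_comm.
  intros k Hk. f_equal. lia.
Qed.

Definition ecoef (j : nat) : C := cpow (-1) j / cfact j.
Definition acoef (mu nu : C) (n k : nat) : C := cpow (-1) n / poch mu n * lcoef nu n k.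
Definition scoef (mu nu : C) (i : nat) : C := csum (fun n => acoef mu nu n (i - n)) i.
Definition target (mu nu : C) (m : nat) : C :=
  cpow (-1) m * poch (mu + nu + RtoC (INR m)) m / (poch mu m * cfact m).

Lemma coef_identity mu nu m : (forall i : nat, mu + RtoC (INR i) <> 0) -> (forall i : nat, nu + 1 + RtoC (INR i) <> 0) ->
  csum (fun j => ecoef j * scoef mu nu (m - j)) m = target mu nu m.
Proof.
  intros Hmu Hnu.
  rewrite csum_rev.
  rewrite (csum_ext_loc _ (fun i => csum (fun n => (fun n k => ecoef (m - n - k) * acoef mu nu n k) n (i - n)%nat) i)).
  2:{ intros i Hi. replace (m - (m - i))%nat with i by lia. unfold scoef. rewrite <- csum_scal.
      apply csum_ext_loc. intros n Hn. f_equal. f_equal. lia. }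
  assert (D := csum_diag (fun n k => ecoef (m - n - k) * acoef mu nu n k) m). cbv beta in D. rewrite D. clear D.
  rewrite (csum_ext_loc _ (fun n => (cpow (-1) m * poch (nu + 1) m) *
           / (poch mu n * poch (nu + 1) (m - n) * cfact n * cfact (m - n)))).
  - rewrite csum_scal, vsum by auto. unfold target.
    assert (P := poch_nz mu m Hmu). assert (P2 := poch_nz (nu+1) m Hnu). assert (F1 := cfact_nz m).
    field. auto.
  - intros n Hn.
    rewrite (csum_ext _ (fun k => (cpow (-1) n / poch mu n) * (cpow (-1) (m - n - k) / cfact (m - n - k) * lcoef nu n k))).
    2:{ intros k. unfold ecoef, acoef. ring. }
    rewrite csum_scal, kummer_coef by auto.
    replace (n + (m - n))%nat with m by lia.
    assert (T : cpow (-1) m = cpow (-1) n * cpow (-1) (m - n)) by (rewrite <- cpow_add; f_equal; lia).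
    rewrite T.
    assert (P := poch_nz mu n Hmu). assert (P2 := poch_nz (nu+1) (m - n) Hnu). assert (F1 := cfact_nz n).
    assert (F2 := cfact_nz (m - n)).
    field. repeat split; auto.
Qed.
Lemma Re_sum_n (a : nat -> C) n : Re (sum_n a n) = sum_n (fun k => Re (a k)) n.
Proof. induction n. rewrite !sum_O. reflexivity. rewrite !sum_Sn, <- IHn. reflexivity. Qed.
Lemma Im_sum_n (a : nat -> C) n : Im (sum_n a n) = sum_n (fun k => Im (a k)) n.
Proof. induction n. rewrite !sum_O. reflexivity. rewrite !sum_Sn, <- IHn. reflexivity. Qed.

Definition CU := NormedModule.UniformSpace C_AbsRing C_NormedModule.
Definition RU := NormedModule.UniformSpace R_AbsRing R_NormedModule.

Lemma is_series_C_iff (a : nat -> C) (l : C) :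
  is_series a l <-> is_series (fun n => Re (a n)) (Re l) /\ is_series (fun n => Im (a n)) (Im l).
Proof.
  unfold is_series. split.
  - intros H0. pose proof (proj1 (@filterlim_locally nat CU eventually _ (sum_n a) l) H0) as H.
    split; apply (@filterlim_locally nat RU eventually _); intros eps; destruct (H eps) as [N HN]; exists N; intros n Hn;
      destruct (HN n Hn) as [H1 H2].
    + rewrite <- Re_sum_n. exact H1.
    + rewrite <- Im_sum_n. exact H2.
  - intros [H1' H2']. pose proof (proj1 (@filterlim_locally nat RU eventually _ _ _) H1') as H1.
    pose proof (proj1 (@filterlim_locally nat RU eventually _ _ _) H2') as H2.
    apply (@filterlim_locally nat CU eventually _). intros eps. destruct (H1 eps) as [N1 HN1]. destruct (H2 eps) as [N2 HN2].
    exists (max N1 N2). intros n Hn. split.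
    + change (ball (Re l) eps (Re (sum_n a n))). rewrite Re_sum_n. apply HN1. lia.
    + change (ball (Im l) eps (Im (sum_n a n))). rewrite Im_sum_n. apply HN2. lia.
Qed.
Lemma is_series_unique_C (a : nat -> C) l l' : is_series a l -> is_series a l' -> l = l'.
Proof.
  intros H H'. apply is_series_C_iff in H as [H1 H2]. apply is_series_C_iff in H' as [H1' H2'].
  apply is_series_unique in H1, H2, H1', H2'.
  destruct l as [l1 l2], l' as [l1' l2']. simpl in *. congruence.
Qed.

Lemma Re_csum (f : nat -> C) n : Re (csum f n) = sum_f_R0 (fun k => Re (f k)) n.
Proof. induction n; simpl; auto. rewrite <- IHn. reflexivity. Qed.
Lemma Im_csum (f : nat -> C) n : Im (csum f n) = sum_f_R0 (fun k => Im (f k)) n.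
Proof. induction n; simpl; auto. rewrite <- IHn. reflexivity. Qed.

Lemma Rabs_Im_le (z : C) : Rabs (Im z) <= Cmod z.
Proof. eapply Rle_trans. 2: apply Rmax_Cmod. apply Rmax_r. Qed.
Lemma Rabs_Re_le (z : C) : Rabs (Re z) <= Cmod z.
Proof. apply re_le_Cmod. Qed.

Lemma ex_series_Re_abs (a : nat -> C) : ex_series (fun n => Cmod (a n)) -> ex_series (fun n => Rabs (Re (a n))).
Proof. intros H. refine (@ex_series_le R_AbsRing R_CompleteNormedModule _ _ _ H). intros n. unfold norm; simpl. rewrite Rabs_Rabsolu. apply Rabs_Re_le. Qed.
Lemma ex_series_Im_abs (a : nat -> C) : ex_series (fun n => Cmod (a n)) -> ex_series (fun n => Rabs (Im (a n))).
Proof. intros H. refine (@ex_series_le R_AbsRing R_CompleteNormedModule _ _ _ H). intros n. unfold norm; simpl. rewrite Rabs_Rabsolu. apply Rabs_Im_le. Qed.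

Lemma sum_f_R0_minus (f g : nat -> R) n : sum_f_R0 (fun k => f k - g k)%R n = (sum_f_R0 f n - sum_f_R0 g n)%R.
Proof. induction n; simpl; auto. rewrite IHn. ring. Qed.
Lemma sum_f_R0_plus (f g : nat -> R) n : sum_f_R0 (fun k => f k + g k)%R n = (sum_f_R0 f n + sum_f_R0 g n)%R.
Proof. induction n; simpl; auto. rewrite IHn. ring. Qed.

Lemma cauchy_C (a b : nat -> C) la lb : is_series a la -> is_series b lb ->
  ex_series (fun n => Cmod (a n)) -> ex_series (fun n => Cmod (b n)) ->
  is_series (fun n => csum (fun k => a k * b (n - k)%nat) n) (la * lb).
Proof.
  intros Ha Hb Ea Eb.
  apply is_series_C_iff in Ha as [Ha1 Ha2]. apply is_series_C_iff in Hb as [Hb1 Hb2].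
  assert (M11 := is_series_mult _ _ _ _ Ha1 Hb1 (ex_series_Re_abs _ Ea) (ex_series_Re_abs _ Eb)).
  assert (M22 := is_series_mult _ _ _ _ Ha2 Hb2 (ex_series_Im_abs _ Ea) (ex_series_Im_abs _ Eb)).
  assert (M12 := is_series_mult _ _ _ _ Ha1 Hb2 (ex_series_Re_abs _ Ea) (ex_series_Im_abs _ Eb)).
  assert (M21 := is_series_mult _ _ _ _ Ha2 Hb1 (ex_series_Im_abs _ Ea) (ex_series_Re_abs _ Eb)).
  apply is_series_C_iff. split.
  - eapply is_series_ext. 2: apply (is_series_minus _ _ _ _ M11 M22).
    intros n. rewrite Re_csum. symmetry.
    rewrite (sum_eq _ (fun k => (Re (a k) * Re (b (n-k)%nat) - Im (a k) * Im (b (n-k)%nat))%R)) by (intros; reflexivity).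
    rewrite sum_f_R0_minus. reflexivity.
  - eapply is_series_ext. 2: apply (is_series_plus _ _ _ _ M12 M21).
    intros n. rewrite Im_csum. symmetry.
    rewrite (sum_eq _ (fun k => (Re (a k) * Im (b (n-k)%nat) + Im (a k) * Re (b (n-k)%nat))%R)) by (intros; destruct (a _) as [p q]; destruct (b _) as [r s]; simpl; ring).
    rewrite sum_f_R0_plus. reflexivity.
Qed.
Lemma exp_series_R (r : R) : is_series (fun n => (r ^ n / INR (fact n))%R) (exp r).
Proof.
  assert (H := is_exp_Reals r). unfold is_pseries in H.
  eapply is_series_ext. 2: exact H. intros n. rewrite pow_n_pow. reflexivity.
Qed.

Lemma cfact_RtoC k : cfact k = RtoC (INR (fact k)).
Proof. reflexivity. Qed.

Lemma INR_fact_pos k : (0 < INR (fact k))%R.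
Proof. apply lt_0_INR. apply lt_O_fact. Qed.

Lemma Cmod_exp_term (w : C) n : Cmod (cpow w n / cfact n) = (Cmod w ^ n / INR (fact n))%R.
Proof.
  rewrite Cmod_div by apply cfact_nz. rewrite cpow_Cpow, Cmod_pow. unfold cfact. rewrite Cmod_R.
  rewrite Rabs_right. reflexivity. left. apply INR_fact_pos.
Qed.

Lemma ex_series_exp_abs (w : C) : ex_series (fun n => Cmod (cpow w n / cfact n)).
Proof.
  exists (exp (Cmod w)). eapply is_series_ext. 2: apply exp_series_R. intros n. rewrite Cmod_exp_term. reflexivity.
Qed.

Lemma C_eq (a b : C) : Re a = Re b -> Im a = Im b -> a = b.
Proof. destruct a, b; simpl; intros; subst; reflexivity. Qed.

Definition bterm (u v : C) (n k : nat) : C := cpow u k / cfact k * (cpow v (n - k) / cfact (n - k)).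

Lemma binom_C (u v : C) n : csum (bterm u v n) n = cpow (u + v) n / cfact n.
Proof.
  induction n. unfold bterm. simpl. unfold cfact. simpl. field.
  assert (Hn := INR_S_nz n).
  assert (E : csum (bterm u v (S n)) (S n) * (RtoC (INR n) + 1) =
              csum (fun k => RtoC (INR k) * bterm u v (S n) k) (S n) +
              csum (fun k => RtoC (INR (S n - k)) * bterm u v (S n) k) (S n)).
  { rewrite <- csum_plus, Cmult_comm, <- csum_scal. apply csum_ext_loc. intros k Hk.
    rewrite minus_INR_C by auto. rewrite INR_S_C. ring. }
  assert (E1 : csum (fun k => RtoC (INR k) * bterm u v (S n) k) (S n) = u * csum (bterm u v n) n).
  { rewrite csum_shift. rewrite <- csum_scal. simpl (INR 0). rewrite Cmult_0_l, Cplus_0_l.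
    apply csum_ext_loc. intros k Hk. unfold bterm. replace (S n - S k)%nat with (n - k)%nat by lia.
    rewrite cfact_S. cbn [cpow]. assert (F := cfact_nz k). assert (F2 := cfact_nz (n - k)).
    assert (H := INR_S_nz k). rewrite INR_S_C. field. auto. }
  assert (E2 : csum (fun k => RtoC (INR (S n - k)) * bterm u v (S n) k) (S n) = v * csum (bterm u v n) n).
  { change (csum (fun k => RtoC (INR (S n - k)) * bterm u v (S n) k) (S n)) with (csum (fun k => RtoC (INR (S n - k)) * bterm u v (S n) k) n + RtoC (INR (S n - S n)) * bterm u v (S n) (S n)). rewrite Nat.sub_diag. simpl (INR 0). rewrite Cmult_0_l, Cplus_0_r.
    rewrite <- csum_scal. apply csum_ext_loc. intros k Hk. unfold bterm. replace (S n - k)%nat with (S (n - k)) by lia.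
    rewrite cfact_S. cbn [cpow]. assert (F := cfact_nz k). assert (F2 := cfact_nz (n - k)).
    assert (H := INR_S_nz (n - k)). rewrite INR_S_C. field. auto. }
  rewrite E1, E2, IHn in E.
  apply (f_equal (fun t => t / (RtoC (INR n) + 1))) in E.
  replace (csum (bterm u v (S n)) (S n) * (RtoC (INR n) + 1) / (RtoC (INR n) + 1)) with (csum (bterm u v (S n)) (S n)) in E by (field; auto).
  rewrite E. rewrite cfact_S. cbn [cpow]. assert (F := cfact_nz n). field. auto.
Qed.
Lemma is_series_zero_R : is_series (fun _ : nat => 0%R) 0%R.
Proof.
  unfold is_series. apply (filterlim_ext (fun _ => 0%R)).
  - intros n. induction n. rewrite sum_O. reflexivity. rewrite sum_Sn, <- IHn. unfold plus; simpl. ring.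
  - apply filterlim_const.
Qed.

Lemma is_series_RtoC (f : nat -> R) l : is_series f l -> is_series (fun n => RtoC (f n)) (RtoC l).
Proof. intros H. apply is_series_C_iff. split; simpl. exact H. apply is_series_zero_R. Qed.

Lemma cpow_RtoC (a : R) n : cpow (RtoC a) n = RtoC (a ^ n).
Proof. induction n; simpl. reflexivity. rewrite IHn, <- RtoC_mult. f_equal. ring. Qed.

Lemma Ci_b_sq (b : R) : Ci * RtoC b * (Ci * RtoC b) = RtoC (- (b * b)).
Proof. apply C_eq; simpl; ring. Qed.

Lemma cpow_iB_even (b : R) i : cpow (Ci * RtoC b) (2 * i) = RtoC ((-1) ^ i * b ^ (2 * i)).
Proof.
  induction i. simpl. f_equal. ring.
  replace (2 * S i)%nat with (2 * i + 2)%nat by lia. rewrite cpow_add, IHi.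
  cbn [cpow]. rewrite Cmult_1_l, Ci_b_sq, <- RtoC_mult. f_equal. rewrite pow_add. simpl. ring.
Qed.

Lemma cpow_iB_odd (b : R) i : cpow (Ci * RtoC b) (2 * i + 1) = Ci * RtoC ((-1) ^ i * b ^ (2 * i + 1)).
Proof.
  rewrite cpow_add, cpow_iB_even. cbn [cpow]. rewrite pow_add. apply C_eq; simpl; ring.
Qed.

Lemma sum_n_pairs (r : nat -> R) i : sum_n r (2 * i + 1) = sum_n (fun j => (r (2 * j)%nat + r (2 * j + 1)%nat)%R) i.
Proof.
  induction i. rewrite sum_O. simpl. rewrite sum_Sn, sum_O. reflexivity.
  replace (2 * S i + 1)%nat with (S (S (2 * i + 1))) by lia.
  rewrite !sum_Sn, IHi. replace (S (2 * i + 1)) with (2 * S i)%nat by lia.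
  replace (S (2 * S i)) with (2 * S i + 1)%nat by lia. unfold plus; simpl. ring.
Qed.

Lemma series_sub_limit (r : nat -> R) L (g : nat -> R) c :
  is_series r L -> is_series g c -> (forall j, (r (2 * j)%nat + r (2 * j + 1)%nat)%R = g j) -> L = c.
Proof.
  intros H1 H2 H3.
  assert (A : is_lim_seq (fun i => sum_n r (2 * i + 1)) L).
  { apply (is_lim_seq_subseq (sum_n r) L (fun i => (2 * i + 1)%nat)).
    apply eventually_subseq. intros; lia. exact H1. }
  assert (B : is_lim_seq (fun i => sum_n r (2 * i + 1)) c).
  { eapply is_lim_seq_ext. 2: exact H2. intros i. rewrite sum_n_pairs. apply sum_n_ext. intros; auto. }
  apply is_lim_seq_unique in A, B. rewrite A in B. injection B. auto.
Qed.

Lemma exp_iB_series (b : R) : is_series (fun n => cpow (Ci * RtoC b) n / cfact n) (cos b, sin b).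
Proof.
  assert (Ex : ex_series (fun n => cpow (Ci * RtoC b) n / cfact n)).
  { refine (@ex_series_le C_AbsRing C_CompleteNormedModule _ _ _ (ex_series_exp_abs (Ci * RtoC b))).
    intros n. apply Rle_refl. }
  destruct Ex as [L HL].
  replace (cos b, sin b) with L; auto.
  apply is_series_C_iff in HL as [H1 H2].
  apply C_eq; simpl.
  - unfold cos. destruct (exist_cos (Rsqr b)) as [c Hc]. unfold cos_in in Hc. apply is_series_Reals in Hc.
    apply (series_sub_limit _ _ _ _ H1 Hc). intros j.
    rewrite cpow_iB_even, cpow_iB_odd. unfold cfact. rewrite <- RtoC_div by (apply Rgt_not_eq, INR_fact_pos).
    replace (Ci * RtoC ((-1) ^ j * b ^ (2 * j + 1)) / RtoC (INR (fact (2 * j + 1)))) with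
      (Ci * RtoC ((-1) ^ j * b ^ (2 * j + 1) / INR (fact (2 * j + 1)))) by (rewrite RtoC_div by (apply Rgt_not_eq, INR_fact_pos); unfold Cdiv; ring).
    simpl. replace (j + (j + 0))%nat with (2 * j)%nat by lia. unfold cos_n, Rsqr. rewrite pow_sqr. field. split; apply Rgt_not_eq, INR_fact_pos.
  - unfold sin. destruct (exist_sin (Rsqr b)) as [c Hc]. unfold sin_in in Hc. apply is_series_Reals in Hc.
    apply (is_series_scal b) in Hc.
    apply (series_sub_limit _ _ _ _ H2 Hc). intros j.
    rewrite cpow_iB_even, cpow_iB_odd. unfold cfact. rewrite <- RtoC_div by (apply Rgt_not_eq, INR_fact_pos).
    replace (Ci * RtoC ((-1) ^ j * b ^ (2 * j + 1)) / RtoC (INR (fact (2 * j + 1)))) with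
      (Ci * RtoC ((-1) ^ j * b ^ (2 * j + 1) / INR (fact (2 * j + 1)))) by (rewrite RtoC_div by (apply Rgt_not_eq, INR_fact_pos); unfold Cdiv; ring).
    simpl. unfold sin_n, Rsqr, scal; simpl; unfold mult; simpl. replace (j + (j + 0))%nat with (2 * j)%nat by lia. rewrite pow_add, pow_sqr. field. try split; apply Rgt_not_eq, INR_fact_pos.
Qed.

Lemma cexp_series (z : C) : is_series (fun n => cpow z n / cfact n) (cexp z).
Proof.
  destruct z as [a b].
  assert (HA : is_series (fun n => cpow (RtoC a) n / cfact n) (RtoC (exp a))).
  { eapply is_series_ext. 2: apply is_series_RtoC, exp_series_R.
    intros n. rewrite cpow_RtoC. unfold cfact. rewrite RtoC_div by (apply Rgt_not_eq, INR_fact_pos). reflexivity. }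
  assert (H := cauchy_C _ _ _ _ HA (exp_iB_series b) (ex_series_exp_abs _) (ex_series_exp_abs _)).
  replace (cexp (a, b)) with (RtoC (exp a) * (cos b, sin b)) by (apply C_eq; unfold cexp; simpl; ring).
  eapply is_series_ext. 2: exact H. intros n.
  replace ((a, b) : C) with (RtoC a + Ci * RtoC b) by (apply C_eq; simpl; ring).
  rewrite <- (binom_C (RtoC a) (Ci * RtoC b)).
  apply csum_ext. intros k. reflexivity.
Qed.
Lemma rsum_nonneg (g : nat -> R) n : (forall k, 0 <= g k) -> 0 <= sum_f_R0 g n.
Proof. intros H. induction n; simpl. apply H. specialize (H (S n)). lra. Qed.

Lemma rsum_mono (g : nat -> R) p n : (forall k, 0 <= g k) -> (p <= n)%nat -> sum_f_R0 g p <= sum_f_R0 g n.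
Proof. intros H Hp. induction n. replace p with O by lia. lra.
  destruct (Nat.eq_dec p (S n)). subst; lra. simpl. specialize (H (S n)). assert (IH := IHn ltac:(lia)). lra. Qed.

Lemma rsum_zero_tail (g : nat -> R) n p : (n <= p)%nat -> (forall k, (n < k)%nat -> g k = 0%R) ->
  sum_f_R0 g p = sum_f_R0 g n.
Proof.
  induction p; intros Hnp H. replace n with O by lia. reflexivity.
  destruct (Nat.eq_dec n (S p)). subst; reflexivity.
  simpl. rewrite IHp by (try lia; auto). rewrite (H (S p)) by lia. ring.
Qed.

Lemma rsum_zeros (g : nat -> R) n : (forall k, (k <= n)%nat -> g k = 0%R) -> sum_f_R0 g n = 0%R.
Proof. induction n; intros H; simpl. apply H; lia. rewrite IHn by (intros; apply H; lia). rewrite H by lia. ring. Qed.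

Lemma rsum_indic (A : nat -> R) N M : (N <= M)%nat ->
  sum_f_R0 (fun n => if Nat.leb n N then 0%R else A n) M = (sum_f_R0 A M - sum_f_R0 A N)%R.
Proof.
  intros H. replace M with (N + (M - N))%nat by lia. generalize (M - N)%nat as d. intros d.
  induction d.
  - rewrite Nat.add_0_r. rewrite rsum_zeros. ring. intros k Hk. destruct (Nat.leb_spec k N). reflexivity. lia.
  - rewrite Nat.add_succ_r. cbn [sum_f_R0]. rewrite IHd. destruct (Nat.leb_spec (S (N + d)) N). lia. ring.
Qed.
Lemma csum_minus (f g : nat -> C) n : csum (fun k => f k - g k) n = csum f n - csum g n.
Proof. induction n; simpl; auto. rewrite IHn. ring. Qed.

Lemma abs_row_bound (f : nat -> nat -> C) (A : nat -> R) n p :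
  (forall n k, (n < k)%nat -> f n k = 0) -> (forall n, sum_f_R0 (fun k => Cmod (f n k)) n <= A n) ->
  sum_f_R0 (fun k => Cmod (f n k)) p <= A n.
Proof.
  intros Hz HA. eapply Rle_trans. 2: apply HA.
  destruct (Nat.le_gt_cases p n).
  - apply rsum_mono; auto. intros; apply Cmod_ge_0.
  - rewrite (rsum_zero_tail _ n p) by (try lia; intros k Hk; rewrite Hz by lia; apply Cmod_0). lra.
Qed.

Lemma diag_est (f : nat -> nat -> C) (A : nat -> R) M :
  (forall n k, (n < k)%nat -> f n k = 0) -> (forall n, sum_f_R0 (fun k => Cmod (f n k)) n <= A n) ->
  Cmod (csum (fun m => csum (fun n => f n (m - n)%nat) m) M - csum (fun n => csum (f n) n) (Nat.div2 M))
  <= sum_f_R0 A M - sum_f_R0 A (Nat.div2 M).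
Proof.
  intros Hz HA. assert (E := Nat.div2_odd M). set (N := Nat.div2 M) in *.
  assert (E' : (2 * N <= M)%nat) by (destruct (Nat.odd M); simpl in E; lia).
  assert (HN : (N <= M)%nat) by lia.
  assert (HN2 : forall n, (n <= N)%nat -> (n <= M - n)%nat) by (intros; lia).
  rewrite csum_diag.
  rewrite (csum_ext_loc (fun n => csum (f n) n) (fun n => if Nat.leb n N then csum (f n) n else 0) N).
  2:{ intros k Hk. destruct (Nat.leb_spec k N). reflexivity. lia. }
  rewrite <- (csum_zero_tail (fun n => if Nat.leb n N then csum (f n) n else 0) N M); auto.
  2:{ intros k Hk1 Hk2. destruct (Nat.leb_spec k N). lia. reflexivity. }
  rewrite <- csum_minus, <- rsum_indic by auto.
  eapply Rle_trans. apply Cmod_csum. apply sum_Rle. intros n Hn.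
  change (fun k => f n k) with (f n). destruct (Nat.leb_spec n N).
  - rewrite (csum_zero_tail (f n) n (M - n)). replace (csum (f n) n - csum (f n) n) with (RtoC 0) by ring. rewrite Cmod_0. lra. auto.
    intros; apply Hz; lia.
  - replace (csum (f n) (M - n) - 0) with (csum (f n) (M - n)) by ring.
    eapply Rle_trans. apply Cmod_csum. apply abs_row_bound; auto.
Qed.
Lemma Cmod_minus_sym (a b : C) : Cmod (a - b) = Cmod (b - a).
Proof. replace (a - b) with (- (b - a)) by ring. apply Cmod_opp. Qed.

Lemma regroup (f : nat -> nat -> C) (A : nat -> R) :
  (forall n k, (n < k)%nat -> f n k = 0) -> (forall n, sum_f_R0 (fun k => Cmod (f n k)) n <= A n) ->
  ex_series A ->
  exists S, is_series (fun n => csum (f n) n) S /\ is_series (fun m => csum (fun n => f n (m - n)%nat) m) S.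
Proof.
  intros Hz HA [SA HSA].
  assert (EP : ex_series (fun n => csum (f n) n)).
  { refine (@ex_series_le C_AbsRing C_CompleteNormedModule _ _ _ (ex_intro _ SA HSA)).
    intros n. change (norm (csum (f n) n)) with (Cmod (csum (f n) n)).
    eapply Rle_trans. apply Cmod_csum. apply HA. }
  destruct EP as [S HS]. exists S. split; auto.
  unfold is_series in *.
  apply (proj2 (@filterlim_locally_ball_norm C_AbsRing nat C_NormedModule eventually _ _ S)).
  intros eps.
  assert (e4 : 0 < eps / 4) by (destruct eps; simpl; lra).
  assert (e2 : 0 < eps / 2) by (destruct eps; simpl; lra).
  destruct (proj1 (@filterlim_locally_ball_norm R_AbsRing nat R_NormedModule eventually _ _ SA) HSA (mkposreal _ e4)) as [N1 HN1].
  destruct (proj1 (@filterlim_locally_ball_norm C_AbsRing nat C_NormedModule eventually _ _ S) HS (mkposreal _ e2)) as [N2 HN2].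
  exists (2 * max N1 N2)%nat. intros M HM.
  assert (E := Nat.div2_odd M). set (N := Nat.div2 M) in *.
  assert (E' : (2 * N <= M)%nat) by (destruct (Nat.odd M); simpl in E; lia).
  assert (HN : (max N1 N2 <= N)%nat) by (destruct (Nat.odd M); simpl in E; lia).
  specialize (HN1 N ltac:(lia)) as H1. specialize (HN1 M ltac:(lia)) as H1'.
  specialize (HN2 N ltac:(lia)) as H2.
  unfold ball_norm in *. simpl in *.
  change (norm (minus (sum_n (fun m => csum (fun n => f n (m - n)%nat) m) M) S)) with
    (Cmod (sum_n (fun m => csum (fun n => f n (m - n)%nat) m) M - S)).
  change (norm (minus (sum_n (fun n => csum (f n) n) N) S)) with (Cmod (sum_n (fun n => csum (f n) n) N - S)) in H2.
  change (norm (minus (sum_n A N) SA)) with (Rabs (sum_n A N - SA)) in H1.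
  change (norm (minus (sum_n A M) SA)) with (Rabs (sum_n A M - SA)) in H1'.
  rewrite sum_n_csum in *. rewrite sum_n_Reals in H1, H1'.
  assert (D := diag_est f A M Hz HA). fold N in D.
  replace (csum (fun m => csum (fun n => f n (m - n)%nat) m) M - S) with
    ((csum (fun m => csum (fun n => f n (m - n)%nat) m) M - csum (fun n => csum (f n) n) N) +
     (csum (fun n => csum (f n) n) N - S)) by ring.
  eapply Rle_lt_trans. apply Cmod_triangle.
  assert (R1 : sum_f_R0 A M - sum_f_R0 A N < eps / 2).
  { apply Rabs_def2 in H1. apply Rabs_def2 in H1'. lra. }
  lra.
Qed.
Lemma regroup_abs (f : nat -> nat -> C) (A : nat -> R) :
  (forall n k, (n < k)%nat -> f n k = 0) -> (forall n, sum_f_R0 (fun k => Cmod (f n k)) n <= A n) ->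
  ex_series A ->
  ex_series (fun m => Cmod (csum (fun n => f n (m - n)%nat) m)).
Proof.
  intros Hz HA EA.
  destruct (regroup (fun n k => RtoC (Cmod (f n k))) A) as [S' [_ HS']]; auto.
  - intros n k H. rewrite Hz by auto. rewrite Cmod_0. reflexivity.
  - intros n. eapply Rle_trans. 2: apply (HA n). right. apply sum_eq. intros. rewrite Cmod_R, Rabs_right. reflexivity.
    apply Rle_ge, Cmod_ge_0.
  - apply is_series_C_iff in HS' as [H1 _].
    refine (@ex_series_le R_AbsRing R_CompleteNormedModule _ _ _ (ex_intro _ _ H1)).
    intros m. change (norm (Cmod (csum (fun n => f n (m - n)%nat) m))) with (Rabs (Cmod (csum (fun n => f n (m - n)%nat) m))).
    rewrite Rabs_right by (apply Rle_ge, Cmod_ge_0). rewrite csum_RtoC. simpl. apply Cmod_csum.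
Qed.
Lemma Cmod_INR_le (c : C) (i : nat) : INR i - Cmod c <= Cmod (c + RtoC (INR i)).
Proof.
  assert (H := Cmod_triangle (c + RtoC (INR i)) (- c)).
  replace (c + RtoC (INR i) + - c) with (RtoC (INR i)) in H by ring.
  rewrite Cmod_R, Cmod_opp, Rabs_right in H by (apply Rle_ge, pos_INR). lra.
Qed.

Lemma delta_finite (c : C) K : (forall i : nat, c + RtoC (INR i) <> 0) ->
  exists d, 0 < d /\ forall i, (i < K)%nat -> d * (INR i + 1) <= Cmod (c + RtoC (INR i)).
Proof.
  intros Hc. induction K.
  - exists 1. split. lra. intros; lia.
  - destruct IHK as [d [Hd HK]].
    assert (P : 0 < Cmod (c + RtoC (INR K))) by (apply Cmod_gt_0, Hc).
    assert (P2 : 0 < INR K + 1) by (pose proof (pos_INR K); lra).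
    exists (Rmin d (Cmod (c + RtoC (INR K)) / (INR K + 1))). split.
    + apply Rmin_pos; auto. apply Rdiv_lt_0_compat; auto.
    + intros i Hi. destruct (Nat.eq_dec i K).
      * subst. eapply Rle_trans. apply Rmult_le_compat_r. lra. apply Rmin_r.
        right. field. lra.
      * eapply Rle_trans. 2: apply HK; lia. apply Rmult_le_compat_r. pose proof (pos_INR i); lra. apply Rmin_l.
Qed.

Lemma delta_lemma (c : C) : (forall i : nat, c + RtoC (INR i) <> 0) ->
  exists d, 0 < d /\ d <= 1 /\ forall i : nat, d * (INR i + 1) <= Cmod (c + RtoC (INR i)).
Proof.
  intros Hc. destruct (INR_unbounded (2 * Cmod c + 1)) as [K HK].
  destruct (delta_finite c K Hc) as [d [Hd HdK]].
  exists (Rmin (1/2) d). split. apply Rmin_pos; lra. split. eapply Rle_trans. apply Rmin_l. lra.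
  intros i. destruct (Nat.lt_ge_cases i K).
  - eapply Rle_trans. 2: apply HdK; auto. apply Rmult_le_compat_r. pose proof (pos_INR i); lra. apply Rmin_r.
  - eapply Rle_trans. apply Rmult_le_compat_r. pose proof (pos_INR i); lra. apply Rmin_l.
    eapply Rle_trans. 2: apply Cmod_INR_le. apply le_INR in H. lra.
Qed.

Lemma poch_lower (c : C) d : 0 < d -> (forall i : nat, d * (INR i + 1) <= Cmod (c + RtoC (INR i))) ->
  forall n, d ^ n * INR (fact n) <= Cmod (poch c n).
Proof.
  intros Hd H n. induction n. simpl. rewrite Cmod_1. lra.
  cbn [poch]. rewrite Cmod_mult. rewrite fact_simpl, mult_INR, S_INR. simpl pow.
  apply Rle_trans with ((d ^ n * INR (fact n)) * (d * (INR n + 1)))%R. right; ring.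
  apply Rmult_le_compat; [ apply Rmult_le_pos; [apply pow_le; lra | apply pos_INR] | apply Rmult_le_pos; [lra | pose proof (pos_INR n); lra] | exact IHn | apply H ].
Qed.

Lemma poch_upper (c : C) n : Cmod (poch c n) <= (Cmod c + 1) ^ n * INR (fact n).
Proof.
  induction n. simpl. rewrite Cmod_1. lra.
  cbn [poch]. rewrite Cmod_mult. rewrite fact_simpl, mult_INR, S_INR. simpl pow.
  apply Rle_trans with (((Cmod c + 1) ^ n * INR (fact n)) * ((Cmod c + 1) * (INR n + 1)))%R. 2: right; ring.
  apply Rmult_le_compat; auto. apply Cmod_ge_0. apply Cmod_ge_0.
  eapply Rle_trans. apply Cmod_triangle. rewrite Cmod_R, Rabs_right by (apply Rle_ge, pos_INR).
  pose proof (pos_INR n). pose proof (Cmod_ge_0 c). nra.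
Qed.

Lemma Cmod_cpow (z : C) n : Cmod (cpow z n) = (Cmod z ^ n)%R.
Proof. rewrite cpow_Cpow. apply Cmod_pow. Qed.

Lemma Cmod_cpow_m1 k : Cmod (cpow (-1) k) = 1%R.
Proof.
  assert (H := cpow_m1_sq k). apply (f_equal Cmod) in H. rewrite Cmod_mult, Cmod_1 in H.
  assert (P := Cmod_ge_0 (cpow (-1) k)). nra.
Qed.

Lemma Cmod_negpoch n k : (k <= n)%nat -> Cmod (poch (- RtoC (INR n)) k) = (INR (fact n) / INR (fact (n - k)))%R.
Proof.
  intros H. assert (E := negpoch n k H).
  apply (f_equal Cmod) in E. rewrite !Cmod_mult, Cmod_cpow_m1 in E.
  unfold cfact in E. rewrite !Cmod_R in E. rewrite !Rabs_right in E by (apply Rle_ge, pos_INR).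
  assert (F := INR_fact_pos (n - k)). rewrite Rmult_1_l in E. rewrite <- E. field. lra.
Qed.
Definition fterm (mu nu x : C) (n k : nat) : C :=
  cpow (- x) n / poch mu n * (poch (nu + 1) n / cfact n *
     (poch (- RtoC (INR n)) k / poch (nu + 1) k * cpow x k / cfact k)).

Lemma laguerre_csum mu nu x n : cpow (- x) n / poch mu n * laguerre n nu x = csum (fterm mu nu x n) n.
Proof. unfold laguerre, fterm. rewrite <- !csum_scal. reflexivity. Qed.

Lemma fterm_zero mu nu x n k : (n < k)%nat -> fterm mu nu x n k = 0.
Proof. intros H. unfold fterm. rewrite poch_neg_zero by auto. unfold Cdiv. ring. Qed.

Lemma div_le_div (a a' b b' : R) : 0 <= a -> a <= a' -> 0 < b' -> b' <= b -> a / b <= a' / b'.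
Proof.
  intros. unfold Rdiv. apply Rmult_le_compat; auto. left. apply Rinv_0_lt_compat; lra.
  apply Rinv_le_contravar; auto.
Qed.

Lemma fterm_bound mu nu x dm dn n k :
  0 < dm -> 0 < dn -> (forall i : nat, dm * (INR i + 1) <= Cmod (mu + RtoC (INR i))) ->
  (forall i : nat, dn * (INR i + 1) <= Cmod (nu + 1 + RtoC (INR i))) -> (k <= n)%nat ->
  Cmod (fterm mu nu x n k) <=
  ((Cmod x * (Cmod (nu + 1) + 1) / dm) ^ n / INR (fact n) * (Binomial.C n k * (Cmod x / dn) ^ k))%R.
Proof.
  intros Hdm Hdn Hm Hn Hk.
  assert (Pm : poch mu n <> 0). { apply Cmod_gt_0. eapply Rlt_le_trans. 2: apply (poch_lower mu dm Hdm Hm).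
    apply Rmult_lt_0_compat. apply pow_lt; auto. apply INR_fact_pos. }
  assert (Pn : poch (nu + 1) k <> 0). { apply Cmod_gt_0. eapply Rlt_le_trans. 2: apply (poch_lower _ dn Hdn Hn).
    apply Rmult_lt_0_compat. apply pow_lt; auto. apply INR_fact_pos. }
  set (X := Cmod x). set (Rn := (Cmod (nu + 1) + 1)%R).
  assert (HX : 0 <= X) by apply Cmod_ge_0.
  assert (E : Cmod (fterm mu nu x n k) =
     ((X ^ n * X ^ k * Cmod (poch (nu + 1) n) * Cmod (poch (- RtoC (INR n)) k)) /
     (Cmod (poch mu n) * INR (fact n) * Cmod (poch (nu + 1) k) * INR (fact k)))%R).
  { unfold fterm. rewrite !Cmod_mult, !Cmod_div, !Cmod_mult, !Cmod_div; auto; try apply cfact_nz.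
    rewrite !Cmod_cpow, Cmod_opp. unfold cfact. rewrite !Cmod_R, !Rabs_right by (apply Rle_ge, pos_INR).
    fold X. field. repeat split; try (apply Rgt_not_eq, INR_fact_pos); apply Rgt_not_eq, Cmod_gt_0; auto. }
  rewrite E.
  assert (F1 := INR_fact_pos n). assert (F2 := INR_fact_pos k). assert (F3 := INR_fact_pos (n - k)).
  eapply Rle_trans. apply div_le_div with
    (a' := (X ^ n * X ^ k * (Rn ^ n * INR (fact n)) * (INR (fact n) / INR (fact (n - k))))%R)
    (b' := ((dm ^ n * INR (fact n)) * INR (fact n) * (dn ^ k * INR (fact k)) * INR (fact k))%R).
  - repeat apply Rmult_le_pos; try apply pow_le; auto; apply Cmod_ge_0.
  - rewrite <- Cmod_negpoch by auto. apply Rmult_le_compat_r. apply Cmod_ge_0.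
    apply Rmult_le_compat_l. apply Rmult_le_pos; apply pow_le; auto. apply poch_upper.
  - repeat apply Rmult_lt_0_compat; try apply pow_lt; auto.
  - apply Rmult_le_compat_r. lra. apply Rmult_le_compat. 
    + repeat apply Rmult_le_pos; try apply pow_le; lra.
    + apply Rmult_le_pos; try apply pow_le; lra.
    + apply Rmult_le_compat_r. lra. apply poch_lower; auto.
    + apply poch_lower; auto.
  - unfold Binomial.C. 
    assert (K1 : 1 <= INR (fact k)). { apply (le_INR 1). apply lt_O_fact. }
    assert (G : 0 <= ((X * Rn / dm) ^ n / INR (fact n) * (INR (fact n) / (INR (fact k) * INR (fact (n - k))) * (X / dn) ^ k))%R).
    { assert (Q1 : 0 <= X * Rn / dm). { unfold Rdiv. apply Rmult_le_pos. apply Rmult_le_pos. auto. unfold Rn. pose proof (Cmod_ge_0 (nu+1)); lra. left; apply Rinv_0_lt_compat; lra. }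
      assert (Q2 : 0 <= X / dn). { unfold Rdiv. apply Rmult_le_pos. auto. left; apply Rinv_0_lt_compat; lra. }
      assert (Q3 : 0 <= (X * Rn / dm) ^ n) by (apply pow_le; auto). assert (Q4 : 0 <= (X / dn) ^ k) by (apply pow_le; auto).
      assert (Q5 : 0 < INR (fact k) * INR (fact (n - k))) by nra.
      unfold Rdiv at 1 3. apply Rmult_le_pos; [apply Rmult_le_pos; [auto | left; apply Rinv_0_lt_compat; auto] | apply Rmult_le_pos; [ | auto]].
      unfold Rdiv. apply Rmult_le_pos. lra. left; apply Rinv_0_lt_compat; auto. }
    apply Rle_trans with (((X * Rn / dm) ^ n / INR (fact n) * (INR (fact n) / (INR (fact k) * INR (fact (n - k))) * (X / dn) ^ k)) / INR (fact k))%R.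
    + right. unfold Rdiv. rewrite !Rpow_mult_distr, !pow_inv. field. repeat split; try lra; apply pow_nonzero; lra.
    + apply Rmult_le_reg_r with (INR (fact k)). lra. unfold Rdiv at 1. rewrite Rmult_assoc, Rinv_l by lra. nra.
Qed.
Lemma row_bound mu nu x dm dn n :
  0 < dm -> 0 < dn -> (forall i : nat, dm * (INR i + 1) <= Cmod (mu + RtoC (INR i))) ->
  (forall i : nat, dn * (INR i + 1) <= Cmod (nu + 1 + RtoC (INR i))) ->
  sum_f_R0 (fun k => Cmod (fterm mu nu x n k)) n <=
  ((Cmod x * (Cmod (nu + 1) + 1) * (Cmod x / dn + 1) / dm) ^ n / INR (fact n))%R.
Proof.
  intros Hdm Hdn Hm Hn.
  eapply Rle_trans. apply sum_Rle. intros k Hk. apply (fterm_bound mu nu x dm dn n k); auto.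
  rewrite (sum_eq _ (fun k => ((Binomial.C n k * (Cmod x / dn) ^ k) * ((Cmod x * (Cmod (nu + 1) + 1) / dm) ^ n / INR (fact n)))%R))
    by (intros; ring).
  rewrite <- scal_sum.
  replace (sum_f_R0 (fun k => (Binomial.C n k * (Cmod x / dn) ^ k)%R) n) with ((Cmod x / dn + 1) ^ n)%R.
  - right. unfold Rdiv. rewrite !Rpow_mult_distr, !pow_inv. ring.
  - rewrite binomial. apply sum_eq. intros. rewrite pow1. ring.
Qed.

Lemma fterm_acoef mu nu x n k : fterm mu nu x n k = acoef mu nu n k * cpow x (n + k).
Proof.
  unfold fterm, acoef, lcoef. rewrite cpow_add.
  replace (- x) with (-1 * x) by ring. rewrite cpow_mult. unfold Cdiv. ring.
Qed.

Lemma lemmaA mu nu x : (forall i : nat, mu + RtoC (INR i) <> 0) -> (forall i : nat, nu + 1 + RtoC (INR i) <> 0) ->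
  exists S, is_series (fun n => cpow (- x) n / poch mu n * laguerre n nu x) S /\
            is_series (fun m => target mu nu m * cpow x m) (cexp (- x) * S).
Proof.
  intros Hmu Hnu.
  destruct (delta_lemma mu Hmu) as [dm [Hdm [_ Hm]]].
  destruct (delta_lemma (nu + 1) Hnu) as [dn [Hdn [_ Hn]]].
  set (q := (Cmod x * (Cmod (nu + 1) + 1) * (Cmod x / dn + 1) / dm)%R).
  assert (EA : ex_series (fun n => (q ^ n / INR (fact n))%R)) by (exists (exp q); apply exp_series_R).
  assert (Hz : forall n k, (n < k)%nat -> fterm mu nu x n k = 0) by (intros; apply fterm_zero; auto).
  assert (HA : forall n, sum_f_R0 (fun k => Cmod (fterm mu nu x n k)) n <= (q ^ n / INR (fact n))%R)
    by (intros; apply row_bound; auto).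
  destruct (regroup _ _ Hz HA EA) as [S [HP HD]].
  assert (ED := regroup_abs _ _ Hz HA EA).
  exists S. split.
  - eapply is_series_ext. 2: exact HP. intros n. simpl. rewrite laguerre_csum. reflexivity.
  - assert (H := cauchy_C _ _ _ _ (cexp_series (- x)) HD (ex_series_exp_abs _) ED).
    eapply is_series_ext. 2: exact H. intros m. simpl.
    rewrite <- coef_identity by auto.
    rewrite Cmult_comm, <- csum_scal. apply csum_ext_loc. intros j Hj.
    unfold scoef. rewrite <- !csum_scal.
    apply csum_ext_loc. intros n Hn0.
    rewrite fterm_acoef. replace (n + (m - j - n))%nat with (m - j)%nat by lia.
    unfold ecoef. replace (- x) with (-1 * x) by ring. rewrite cpow_mult.
    replace (cpow x m) with (cpow x j * cpow x (m - j)) by (rewrite <- cpow_add; f_equal; lia).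
    unfold Cdiv. ring.
Qed.
Lemma ratio_conv (t : nat -> C) (M : R) : 0 <= M ->
  (forall k, Cmod (t (S k)) <= M / (INR k + 1) * Cmod (t k)) ->
  ex_series (fun k => Cmod (t k)) /\ ex_series t.
Proof.
  intros HM H.
  assert (B : forall k, Cmod (t k) <= Cmod (t O) * (M ^ k / INR (fact k))).
  { induction k. simpl. rewrite Rdiv_1_r. lra.
    eapply Rle_trans. apply H. rewrite fact_simpl, mult_INR, S_INR. simpl pow.
    assert (P := INR_fact_pos k). assert (P2 : 0 < INR k + 1) by (pose proof (pos_INR k); lra).
    apply Rle_trans with (M / (INR k + 1) * (Cmod (t O) * (M ^ k / INR (fact k))))%R.
    apply Rmult_le_compat_l. unfold Rdiv. apply Rmult_le_pos; auto. left; apply Rinv_0_lt_compat; auto. auto.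
    right. field. lra. }
  assert (E : ex_series (fun k => (Cmod (t O) * (M ^ k / INR (fact k)))%R)).
  { exists (Cmod (t O) * exp M)%R. apply (is_series_scal (Cmod (t O)) _ _ (exp_series_R M)). }
  assert (E1 : ex_series (fun k => Cmod (t k))).
  { refine (@ex_series_le R_AbsRing R_CompleteNormedModule _ _ _ E). intros k.
    change (norm (Cmod (t k))) with (Rabs (Cmod (t k))). rewrite Rabs_right by (apply Rle_ge, Cmod_ge_0). apply B. }
  split; auto.
  refine (@ex_series_le C_AbsRing C_CompleteNormedModule _ _ _ E1). intros k. apply Rle_refl.
Qed.

Lemma Cmod_add_INR_le (a : C) k : Cmod (a + RtoC (INR k)) <= (Cmod a + 1) * (INR k + 1).
Proof.
  eapply Rle_trans. apply Cmod_triangle. rewrite Cmod_R, Rabs_right by (apply Rle_ge, pos_INR).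
  pose proof (pos_INR k). pose proof (Cmod_ge_0 a). nra.
Qed.

Lemma F33_step a1 a2 a3 b1 b2 b3 z k :
  (forall i : nat, b1 + RtoC (INR i) <> 0) -> (forall i : nat, b2 + RtoC (INR i) <> 0) -> (forall i : nat, b3 + RtoC (INR i) <> 0) ->
  F33_term a1 a2 a3 b1 b2 b3 z (S k) = F33_term a1 a2 a3 b1 b2 b3 z k *
    ((a1 + RtoC (INR k)) * (a2 + RtoC (INR k)) * (a3 + RtoC (INR k)) /
     ((b1 + RtoC (INR k)) * (b2 + RtoC (INR k)) * (b3 + RtoC (INR k))) * z / (RtoC (INR k) + 1)).
Proof.
  intros H1 H2 H3. unfold F33_term. cbn [poch cpow]. rewrite cfact_S.
  assert (P1 := poch_nz b1 k H1). assert (P2 := poch_nz b2 k H2). assert (P3 := poch_nz b3 k H3).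
  assert (F := cfact_nz k). assert (K := INR_S_nz k).
  field. repeat split; auto.
Qed.

Lemma F33_conv a1 a2 a3 b1 b2 b3 z :
  (forall i : nat, b1 + RtoC (INR i) <> 0) -> (forall i : nat, b2 + RtoC (INR i) <> 0) -> (forall i : nat, b3 + RtoC (INR i) <> 0) ->
  exists F, is_series (F33_term a1 a2 a3 b1 b2 b3 z) F.
Proof.
  intros H1 H2 H3.
  destruct (delta_lemma b1 H1) as [d1 [D1 [_ E1]]].
  destruct (delta_lemma b2 H2) as [d2 [D2 [_ E2]]].
  destruct (delta_lemma b3 H3) as [d3 [D3 [_ E3]]].
  set (M := ((Cmod a1 + 1) * (Cmod a2 + 1) * (Cmod a3 + 1) / (d1 * d2 * d3) * Cmod z)%R).
  assert (HM : 0 <= M).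
  { unfold M. pose proof (Cmod_ge_0 a1). pose proof (Cmod_ge_0 a2). pose proof (Cmod_ge_0 a3). pose proof (Cmod_ge_0 z).
    unfold Rdiv. apply Rmult_le_pos; auto. apply Rmult_le_pos. apply Rmult_le_pos; try lra. apply Rmult_le_pos; lra.
    left. apply Rinv_0_lt_compat. apply Rmult_lt_0_compat; auto. apply Rmult_lt_0_compat; auto. }
  destruct (ratio_conv (F33_term a1 a2 a3 b1 b2 b3 z) M HM) as [_ [F HF]].
  2: exists F; auto.
  intros k. rewrite F33_step by auto. rewrite Cmod_mult. rewrite Rmult_comm. apply Rmult_le_compat_r. apply Cmod_ge_0.
  assert (K := INR_S_nz k). assert (Q1 := H1 k). assert (Q2 := H2 k). assert (Q3 := H3 k).
  assert (Kp : 0 < INR k + 1) by (pose proof (pos_INR k); lra).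
  unfold Cdiv. rewrite !Cmod_mult, !Cmod_inv; auto. 2: repeat apply Cmult_neq_0; auto.
  rewrite !Cmod_mult. replace (RtoC (INR k) + 1) with (RtoC (INR k + 1)) by (rewrite RtoC_plus; reflexivity).
  rewrite Cmod_R, Rabs_right by lra.
  assert (L1 := E1 k). assert (L2 := E2 k). assert (L3 := E3 k).
  assert (U1 := Cmod_add_INR_le a1 k). assert (U2 := Cmod_add_INR_le a2 k). assert (U3 := Cmod_add_INR_le a3 k).
  set (c1 := Cmod (b1 + RtoC (INR k))) in *. set (c2 := Cmod (b2 + RtoC (INR k))) in *. set (c3 := Cmod (b3 + RtoC (INR k))) in *.
  set (u1 := Cmod (a1 + RtoC (INR k))) in *. set (u2 := Cmod (a2 + RtoC (INR k))) in *. set (u3 := Cmod (a3 + RtoC (INR k))) in *.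
  set (K1 := (INR k + 1)%R) in *.
  assert (0 <= u1) by apply Cmod_ge_0. assert (0 <= u2) by apply Cmod_ge_0. assert (0 <= u3) by apply Cmod_ge_0.
  assert (0 <= Cmod z) by apply Cmod_ge_0.
  assert (0 < d1 * K1) by (apply Rmult_lt_0_compat; lra).
  assert (0 < d2 * K1) by (apply Rmult_lt_0_compat; lra).
  assert (0 < d3 * K1) by (apply Rmult_lt_0_compat; lra).
  apply Rle_trans with ((Cmod a1 + 1) * K1 * ((Cmod a2 + 1) * K1) * ((Cmod a3 + 1) * K1) * / (d1 * K1 * (d2 * K1) * (d3 * K1)) * Cmod z * / K1)%R.
  - apply Rmult_le_compat_r. left; apply Rinv_0_lt_compat; lra.
    apply Rmult_le_compat_r. auto.
    apply Rmult_le_compat.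
    + repeat apply Rmult_le_pos; auto.
    + left. apply Rinv_0_lt_compat. repeat apply Rmult_lt_0_compat; lra.
    + apply Rmult_le_compat; try apply Rmult_le_pos; auto. apply Rmult_le_compat; auto.
    + apply Rinv_le_contravar. repeat apply Rmult_lt_0_compat; lra.
      apply Rmult_le_compat; try (apply Rmult_le_pos; lra); try lra. apply Rmult_le_compat; lra.
  - right. unfold M. field. repeat split; lra.
Qed.
Lemma two_nz : (2 : C) <> 0.
Proof. apply RtoC_nz. intro; lra. Qed.

Lemma dup a k : cpow 4 k * poch (a / 2) k * poch ((a + 1) / 2) k = poch a (2 * k).
Proof.
  induction k. simpl. ring.
  replace (2 * S k)%nat with (S (S (2 * k))) by lia.
  cbn [poch cpow]. rewrite <- IHk.
  rewrite S_INR, mult_INR, RtoC_plus, RtoC_mult.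
  assert (T := two_nz). field_simplify; auto. 
  replace (RtoC (INR 2)) with (2 : C) by (simpl; f_equal; ring). field.
Qed.
Lemma cpow_nz (z : C) k : z <> 0 -> cpow z k <> 0.
Proof. intros H. induction k; cbn [cpow]. apply RtoC_nz. intro; lra. apply Cmult_neq_0; auto. Qed.

Lemma nz_shiftn (c : C) (j : nat) : (forall i : nat, c + RtoC (INR i) <> 0) -> (forall i : nat, c + RtoC (INR j) + RtoC (INR i) <> 0).
Proof. intros H i. replace (c + RtoC (INR j) + RtoC (INR i)) with (c + RtoC (INR (j + i))) by (rewrite plus_INR, RtoC_plus; ring). apply H. Qed.

Lemma F33_swap a1 a2 a3 b1 b2 b3 z k : F33_term a1 a2 a3 b1 b2 b3 z k = F33_term a1 a3 a2 b1 b2 b3 z k.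
Proof. unfold F33_term, Cdiv. ring. Qed.

Definition gterm (nu x a B : C) (k : nat) : C :=
  cpow (-1) k * ((nu + 2 + RtoC (INR k)) / (nu + 2)) * poch (a + RtoC (INR k)) k / (poch B k * cfact k) * cpow x k.

Lemma F33_simpl nu a B x k : (forall i : nat, nu + 2 + RtoC (INR i) <> 0) -> (forall i : nat, B + RtoC (INR i) <> 0) ->
  (forall i : nat, a + RtoC (INR i) <> 0) ->
  F33_term (nu + 3) ((a + 1) / 2) (a / 2) (nu + 2) B a (- (4) * x) k = gterm nu x a B k.
Proof.
  intros Hn HB Ha. unfold F33_term, gterm.
  assert (E1 : poch (nu + 3) k * (nu + 2) = poch (nu + 2) k * (nu + 2 + RtoC (INR k))).
  { assert (E := poch_front (nu + 2) k). cbn [poch] in E. replace (nu + 2 + 1) with (nu + 3) in E by ring.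
    rewrite E. ring. }
  assert (E2 := dup a k). replace (2 * k)%nat with (k + k)%nat in E2 by lia. rewrite poch_add in E2.
  assert (E3 : cpow (- (4) * x) k = cpow (-1) k * cpow 4 k * cpow x k).
  { replace (- (4) * x) with (-1 * 4 * x) by ring. rewrite !cpow_mult. reflexivity. }
  rewrite E3.
  assert (N1 : nu + 2 <> 0) by (replace (nu + 2) with (nu + 2 + RtoC (INR 0)) by (simpl; ring); apply Hn).
  assert (P1 := poch_nz _ k Hn). assert (P2 := poch_nz _ k HB). assert (P3 := poch_nz _ k Ha).
  assert (F := cfact_nz k). assert (C4 : cpow 4 k <> 0) by (apply cpow_nz; apply RtoC_nz; intro; lra).
  transitivity ((cpow 4 k * poch (a / 2) k * poch ((a + 1) / 2) k) *
     (poch (nu + 3) k * cpow (-1) k * cpow x k / (poch (nu + 2) k * poch B k * poch a k * cfact k))).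
  { field. repeat split; auto. }
  rewrite E2.
  replace (poch (nu + 3) k) with (poch (nu + 2) k * (nu + 2 + RtoC (INR k)) / (nu + 2)) by (rewrite <- E1; field; auto).
  field. repeat split; auto.
Qed.
Definition sh (f : nat -> C) (m : nat) : C := match m with O => 0 | S m' => f m' end.

Lemma is_series_sh (a : nat -> C) l : is_series a l -> is_series (sh a) l.
Proof.
  intros H. apply is_series_decr_1.
  match goal with |- is_series _ ?L => replace L with l end. exact H.
  destruct l; apply C_eq; simpl; ring.
Qed.

Lemma final_coef mu nu x m :
  (forall i : nat, mu + RtoC (INR i) <> 0) -> (forall i : nat, nu + 1 + RtoC (INR i) <> 0) ->
  target mu nu m * cpow x m + (- (x / (nu + 2))) * sh (fun m => target mu (nu + 1) m * cpow x m) m =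
  gterm nu x (mu + nu + 1) mu m + (2 * x / mu) * sh (gterm nu x (mu + nu + 2) (mu + 1)) m
  + (cpow x 2 / (mu * (mu + 1))) * sh (sh (gterm nu x (mu + nu + 3) (mu + 2))) m.
Proof.
  intros Hmu Hnu.
  assert (N0 : mu <> 0) by (replace mu with (mu + RtoC (INR 0)) by (simpl; ring); apply Hmu).
  assert (N1 : mu + 1 <> 0) by (replace (mu + 1) with (mu + RtoC (INR 1)) by (simpl; ring); apply Hmu).
  assert (N2 : nu + 2 <> 0) by (replace (nu + 2) with (nu + 1 + RtoC (INR 1)) by (simpl; ring); apply Hnu).
  destruct m as [|[|n]].
  - unfold target, gterm, sh. cbn [poch cpow]. unfold cfact. simpl. field. auto.
  - unfold target, gterm, sh. cbn [poch cpow]. unfold cfact. simpl. field. auto.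
  - unfold target, gterm, sh.
    set (Q := poch (mu + nu + 3 + RtoC (INR n)) n).
    set (P := poch mu n). set (F := cfact n).
    assert (I1 : RtoC (INR (S n)) = RtoC (INR n) + 1) by apply INR_S_C.
    assert (I2 : RtoC (INR (S (S n))) = RtoC (INR n) + 2) by (rewrite !INR_S_C; ring).
    assert (A1 : poch (mu + nu + RtoC (INR (S (S n)))) (S (S n)) = (mu + nu + RtoC (INR n) + 2) * Q * (mu + nu + 2 * RtoC (INR n) + 3)).
    { rewrite poch_front. cbn [poch]. unfold Q. replace (mu + nu + RtoC (INR (S (S n))) + 1) with (mu + nu + 3 + RtoC (INR n)) by (rewrite I2; ring).
      rewrite I2. ring. }
    assert (A2 : poch (mu + (nu + 1) + RtoC (INR (S n))) (S n) = (mu + nu + RtoC (INR n) + 2) * Q).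
    { rewrite poch_front. unfold Q. replace (mu + (nu + 1) + RtoC (INR (S n)) + 1) with (mu + nu + 3 + RtoC (INR n)) by (rewrite I1; ring).
      rewrite I1. ring. }
    assert (A3 : poch (mu + nu + 1 + RtoC (INR (S (S n)))) (S (S n)) = Q * (mu + nu + 2 * RtoC (INR n) + 3) * (mu + nu + 2 * RtoC (INR n) + 4)).
    { replace (mu + nu + 1 + RtoC (INR (S (S n)))) with (mu + nu + 3 + RtoC (INR n)) by (rewrite I2; ring).
      cbn [poch]. unfold Q. rewrite I1. ring. }
    assert (A4 : poch (mu + nu + 2 + RtoC (INR (S n))) (S n) = Q * (mu + nu + 2 * RtoC (INR n) + 3)).
    { replace (mu + nu + 2 + RtoC (INR (S n))) with (mu + nu + 3 + RtoC (INR n)) by (rewrite I1; ring).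
      cbn [poch]. unfold Q. ring. }
    assert (A5 : poch (mu + nu + 3 + RtoC (INR n)) n = Q) by reflexivity.
    assert (B1 : poch mu (S (S n)) = P * (mu + RtoC (INR n)) * (mu + RtoC (INR n) + 1)).
    { cbn [poch]. unfold P. rewrite I1. ring. }
    assert (B2 : poch mu (S n) = P * (mu + RtoC (INR n))) by reflexivity.
    assert (B3 : poch (mu + 1) (S n) = P * (mu + RtoC (INR n)) * (mu + RtoC (INR n) + 1) / mu).
    { rewrite <- B1. rewrite (poch_front mu (S n)). field. auto. }
    assert (B4 : poch (mu + 2) n = P * (mu + RtoC (INR n)) * (mu + RtoC (INR n) + 1) / (mu * (mu + 1))).
    { rewrite <- B1. rewrite (poch_front mu (S n)), (poch_front (mu + 1) n). replace (mu + 1 + 1) with (mu + 2) by ring. field. auto. }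
    assert (C1 : cfact (S (S n)) = F * (RtoC (INR n) + 1) * (RtoC (INR n) + 2)).
    { rewrite !cfact_S. unfold F. rewrite I1. ring. }
    assert (C2 : cfact (S n) = F * (RtoC (INR n) + 1)) by (rewrite cfact_S; reflexivity).
    rewrite A1, A2, A3, A4, B1, B2, B3, B4, C1, C2.
    cbn [cpow]. rewrite I1, I2.
    assert (HP : P <> 0) by (apply poch_nz; auto).
    assert (HF : F <> 0) by apply cfact_nz.
    assert (H3 : mu + RtoC (INR n) <> 0) by apply Hmu.
    assert (H4 : mu + RtoC (INR n) + 1 <> 0) by (replace (mu + RtoC (INR n) + 1) with (mu + RtoC (INR (S n))) by (rewrite I1; ring); apply Hmu).
    assert (H5 : RtoC (INR n) + 1 <> 0) by apply INR_S_nz.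
    assert (H6 : RtoC (INR n) + 2 <> 0) by (rewrite <- I2; apply RtoC_nz; apply not_0_INR; lia).
    field. repeat split; auto.
Qed.
Theorem mainTheorem10 (nu mu x : C)
  (Hmu : forall k : nat, mu + RtoC (INR k) <> 0)
  (Hnu : forall k : nat, nu + 1 + RtoC (INR k) <> 0)
  (Hmunu : forall k : nat, mu + nu + 1 + RtoC (INR k) <> 0) :
  let h := mu / 2 + nu / 2 in
  exists S F1 F2 F3 : C,
    is_series (fun n => cpow (- x) n / poch mu n *
                 (laguerre n nu x - x / (nu + 2) * laguerre n (nu + 1) x)) S /\
    is_series (F33_term (nu + 3) (h + 1) (h + /2) (nu + 2) mu (mu + nu + 1) (-(4) * x)) F1 /\
    is_series (F33_term (nu + 3) (h + 1) (h + 3/2) (nu + 2) (mu + 1) (mu + nu + 2) (-(4) * x)) F2 /\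
    is_series (F33_term (nu + 3) (h + 2) (h + 3/2) (nu + 2) (mu + 2) (mu + nu + 3) (-(4) * x)) F3 /\
    cexp (- x) * S = F1 + 2 * x / mu * F2 + cpow x 2 / (mu * (mu + 1)) * F3.
Proof.
  intros h.
  assert (T2 := two_nz).
  destruct (lemmaA mu nu x Hmu Hnu) as [S1 [HS1 HT1]].
  assert (Hnu1 := nz_shift (nu + 1) Hnu).
  destruct (lemmaA mu (nu + 1) x Hmu Hnu1) as [S2 [HS2 HT2]].
  assert (Hnu2 : forall i : nat, nu + 2 + RtoC (INR i) <> 0).
  { intros i. replace (nu + 2) with (nu + 1 + 1) by ring. apply Hnu1. }
  assert (Hmu1 := nz_shift mu Hmu).
  assert (Hmu2 : forall i : nat, mu + 2 + RtoC (INR i) <> 0).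
  { intros i. replace (mu + 2) with (mu + 1 + 1) by ring. apply (nz_shift _ Hmu1). }
  assert (Hp2 : forall i : nat, mu + nu + 2 + RtoC (INR i) <> 0).
  { intros i. replace (mu + nu + 2) with (mu + nu + 1 + 1) by ring. apply (nz_shift _ Hmunu). }
  assert (Hp3 : forall i : nat, mu + nu + 3 + RtoC (INR i) <> 0).
  { intros i. replace (mu + nu + 3) with (mu + nu + 2 + 1) by ring. apply (nz_shift _ Hp2). }
  assert (E1 : forall k, F33_term (nu + 3) (h + 1) (h + /2) (nu + 2) mu (mu + nu + 1) (-(4) * x) k = gterm nu x (mu + nu + 1) mu k).
  { intros k. replace (h + 1) with ((mu + nu + 1 + 1) / 2) by (unfold h; field; auto).
    replace (h + /2) with ((mu + nu + 1) / 2) by (unfold h; field; auto). apply F33_simpl; auto. }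
  assert (E2 : forall k, F33_term (nu + 3) (h + 1) (h + 3/2) (nu + 2) (mu + 1) (mu + nu + 2) (-(4) * x) k = gterm nu x (mu + nu + 2) (mu + 1) k).
  { intros k. rewrite F33_swap. replace (h + 1) with ((mu + nu + 2) / 2) by (unfold h; field; auto).
    replace (h + 3/2) with ((mu + nu + 2 + 1) / 2) by (unfold h; field; auto). apply F33_simpl; auto. }
  assert (E3 : forall k, F33_term (nu + 3) (h + 2) (h + 3/2) (nu + 2) (mu + 2) (mu + nu + 3) (-(4) * x) k = gterm nu x (mu + nu + 3) (mu + 2) k).
  { intros k. replace (h + 2) with ((mu + nu + 3 + 1) / 2) by (unfold h; field; auto).
    replace (h + 3/2) with ((mu + nu + 3) / 2) by (unfold h; field; auto). apply F33_simpl; auto. }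
  destruct (F33_conv (nu + 3) (h + 1) (h + /2) (nu + 2) mu (mu + nu + 1) (-(4) * x)) as [F1 HF1]; auto.
  destruct (F33_conv (nu + 3) (h + 1) (h + 3/2) (nu + 2) (mu + 1) (mu + nu + 2) (-(4) * x)) as [F2 HF2]; auto.
  destruct (F33_conv (nu + 3) (h + 2) (h + 3/2) (nu + 2) (mu + 2) (mu + nu + 3) (-(4) * x)) as [F3 HF3]; auto.
  set (c := - (x / (nu + 2))).
  exists (S1 + c * S2), F1, F2, F3.
  split; [| split; [| split; [| split]]]; auto.
  - assert (H := is_series_plus _ _ _ _ HS1 (is_series_scal c _ _ HS2)).
    eapply is_series_ext. 2: exact H. intros n. change (plus ?a ?b) with (a + b). change (scal ?a ?b) with (a * b).
    unfold c. match goal with |- ?A = ?B => change (@eq C A B) end. ring.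
  - assert (G1 : is_series (gterm nu x (mu + nu + 1) mu) F1) by (eapply is_series_ext; [exact E1 | exact HF1]).
    assert (G2 : is_series (gterm nu x (mu + nu + 2) (mu + 1)) F2) by (eapply is_series_ext; [exact E2 | exact HF2]).
    assert (G3 : is_series (gterm nu x (mu + nu + 3) (mu + 2)) F3) by (eapply is_series_ext; [exact E3 | exact HF3]).
    assert (R := is_series_plus _ _ _ _ (is_series_plus _ _ _ _ G1 (is_series_scal (2 * x / mu) _ _ (is_series_sh _ _ G2)))
                    (is_series_scal (cpow x 2 / (mu * (mu + 1))) _ _ (is_series_sh _ _ (is_series_sh _ _ G3)))).
    assert (L := is_series_plus _ _ _ _ HT1 (is_series_scal c _ _ (is_series_sh _ _ HT2))).
    assert (L' : is_series (fun m => target mu nu m * cpow x m + c * sh (fun m => target mu (nu + 1) m * cpow x m) m)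
                   (cexp (- x) * S1 + c * (cexp (- x) * S2))) by exact L.
    assert (R' : is_series (fun m => target mu nu m * cpow x m + c * sh (fun m => target mu (nu + 1) m * cpow x m) m)
                   (F1 + 2 * x / mu * F2 + cpow x 2 / (mu * (mu + 1)) * F3)).
    { eapply is_series_ext. 2: exact R. intros m. change (plus ?a ?b) with (a + b). change (scal ?a ?b) with (a * b).
      unfold c. symmetry. apply final_coef; auto. }
    rewrite <- (is_series_unique_C _ _ _ L' R'). ring.
Qed.
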